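(* Let $\sigma, \tau \in \mathrm{Perm}(S)$. Set $S' = S \setminus \mathrm{supp}(\tau)$. Let $\pi' \in \mathrm{Perm}(S')$, and let $\pi$ be the permutation with $\pi|_{\mathrm{supp}(\tau)} = \tau$ and $\pi|_{S'} = \pi'$. Let $\mathbf{Z} \in M_N(\mathbb{C})^S$. If $S' = \varnothing$, then $\prod_{\gamma \in \mathrm{Cyc}(\pi \sigma)} \mathrm{tr}_N(\prod_{k \in \gamma} Z_k) = \prod_{\gamma \in \mathrm{Cyc}(\tau \sigma)} \mathrm{tr}_N(\prod_{k \in \gamma} Z_k) = \lambda_{\sigma,\tau}$. Otherwise, we have \[ \prod_{\gamma \in \mathrm{Cyc}(\pi \sigma)} \mathrm{tr}_N \left( \prod_{k \in \gamma} Z_k \right) = \prod_{\gamma \in \mathrm{Cyc}(\pi'(\sigma \ominus \tau))} \mathrm{tr}_N \left( \prod_{k \in \gamma} Z_k^{\tau,\sigma} \right). \]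
   Context: $S \subseteq \mathbb{N}$ is a finite set, $\mathrm{Perm}(S)$ the permutations of $S$, $\mathrm{supp}(\sigma)=\{k: \sigma(k)\neq k\}$, and $\mathrm{Cyc}(\sigma)$ the set of cycles of $\sigma$ (nontrivial cycles together with fixed points, each fixed point viewed as a trivial cycle). $M_N(\mathbb{C})$ is the algebra of $N\times N$ complex matrices and $\mathrm{tr}_N = \frac1N \mathrm{Tr}$. For a cycle $\gamma$ written as $(k_1 \dots k_m)$ with $k_1 = \min \mathrm{supp}(\gamma)$, $\prod_{k \in \gamma} x_k := x_{k_1}\cdots x_{k_m}$; for a fixed point $j$, $\prod_{k\in\gamma} x_k := x_j$. For $\sigma,\tau \in \mathrm{Perm}(S)$, $\sigma \ominus \tau \in \mathrm{Perm}(S \setminus \mathrm{supp}(\tau))$ is defined by $(\sigma\ominus\tau)(k) = (\tau\sigma)^{r(k)}(k)$, where $r(k)\ge 1$ is the smallest index with $(\tau\sigma)^{r(k)}(k) \notin \mathrm{supp}(\tau)$. The $(\sigma,\tau)$-reduction $\mathbf{Z}^{\sigma,\tau} \in M_N(\mathbb{C})^{S\setminus \mathrm{supp}(\tau)}$ of $\mathbf{Z} = (Z_k)_{k\in S}$ (written $Z_k^{\tau,\sigma}$ in the claim): for $j \in S \setminus \mathrm{supp}(\tau)$, with $r(j)\ge1$ the first index such that $(\tau\sigma)^{r(j)}(j)\notin \mathrm{supp}(\tau)$, set $Z_j^{\sigma,\tau} = Z_j Z_{(\tau\sigma)(j)} \cdots Z_{(\tau\sigma)^{r(j)-1}(j)}$.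 Let the scalar $\lambda_{\sigma,\tau} = \prod_{\gamma \in \mathrm{Cyc}(\tau\sigma),\ \mathrm{supp}(\gamma)\subseteq \mathrm{supp}(\tau)} \mathrm{tr}_N(\prod_{k\in\gamma} Z_k)$ (the product over cycles of $\tau\sigma$, possibly fixed points, contained in $\mathrm{supp}(\tau)$); then the value of $Z^{\sigma,\tau}_m$ for $m = \min(S\setminus\mathrm{supp}(\tau))$ is additionally multiplied by $\lambda_{\sigma,\tau}$. If $\mathrm{supp}(\tau) = S$, all cycles of $\tau\sigma$ contribute to $\lambda_{\sigma,\tau}$. *)

(* Defs.v *)
From mathcomp Require Import all_boot all_algebra all_fingroup complex.
From mathcomp Require Import reals.
Set Implicit Arguments. Unset Strict Implicit. Unset Printing Implicit Defensive.
Import GRing.Theory Num.Theory.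
Local Open Scope ring_scope.

(* The finite set S of natural numbers is modelled as S : {set 'I_n}
   (any finite S ⊆ ℕ sits in some 'I_n, with the same order).
   Perm(S) = permutations of 'I_n that are perm_on S. *)

(* composition in the usual (right-to-left) sense: (pcmp t s) k = t (s k) *)
Definition pcmp n (t s : {perm 'I_n}) : {perm 'I_n} := (s * t)%g.

Definition supp n (t : 'I_n -> 'I_n) : {set 'I_n} := [set k | t k != k].

Definition trN (C : fieldType) N (A : 'M[C]_N) : C := (N%:R)^-1 * \tr A.

Definition mxword (C : fieldType) N n (Z : 'I_n -> 'M[C]_N) (s : seq 'I_n)
  : 'M[C]_N := foldr (fun k M => Z k *m M) 1%:M s.

Definition cycword n (f : 'I_n -> 'I_n) (x : 'I_n) : seq 'I_n :=
  traject f x (fingraph.order f x).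

Definition cycmin n (f : 'I_n -> 'I_n) (x : 'I_n) : bool :=
  [forall y, fconnect f x y ==> (x <= y)%N].

(* \prod_{gamma in Cyc(f)} tr_N (\prod_{k in gamma} Z_k), f a permutation of D;
   each cycle (fixed points included) is represented by its minimum. *)
Definition cycprod (C : fieldType) N n (f : 'I_n -> 'I_n) (D : {set 'I_n})
  (Z : 'I_n -> 'M[C]_N) : C :=
  \prod_(x in D | cycmin f x) trN (mxword Z (cycword f x)).

(* r(k) >= 1: first index with (tau sigma)^{r(k)}(k) \notin supp tau *)
Definition rind n (sigma tau : {perm 'I_n}) (k : 'I_n) : nat :=
  (find (fun y => y \notin supp tau)
        [seq iter i.+1 (pcmp tau sigma) k | i <- iota 0 n]).+1.

(* sigma \ominus tau, as a function (relevant on S \ supp tau) *)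
Definition pminus n (sigma tau : {perm 'I_n}) (k : 'I_n) : 'I_n :=
  iter (rind sigma tau k) (pcmp tau sigma) k.

Definition lambda (C : fieldType) N n (sigma tau : {perm 'I_n}) (S : {set 'I_n})
  (Z : 'I_n -> 'M[C]_N) : C :=
  \prod_(x in S | cycmin (pcmp tau sigma) x &&
          [forall y, fconnect (pcmp tau sigma) x y ==> (y \in supp tau)])
     trN (mxword Z (cycword (pcmp tau sigma) x)).

Definition Zred (C : fieldType) N n (sigma tau : {perm 'I_n}) (S : {set 'I_n})
  (Z : 'I_n -> 'M[C]_N) (j : 'I_n) : 'M[C]_N :=
  let w := mxword Z [seq iter i (pcmp tau sigma) j | i <- iota 0 (rind sigma tau j)] in
  if [forall k in S :\: supp tau, (j <= k)%N] then lambda sigma tau S Z *: w else w.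

(* Main.v *)
Require Import Defs.
From mathcomp Require Import all_boot all_algebra all_fingroup complex.
From mathcomp Require Import reals.
From mathcomp Require Import zify.
Set Implicit Arguments. Unset Strict Implicit. Unset Printing Implicit Defensive.
Import GRing.Theory Num.Theory.

Lemma traject_map (T : finType) (f : T -> T) x n :
  traject f x n = [seq iter i f x | i <- iota 0 n].
Proof.
elim: n x => [|n IH] x //=; rewrite IH -[1%N]/(1 + 0)%N iotaDl -map_comp.
by congr (_ :: _); apply: eq_map => i /=; rewrite -iterSr.
Qed.

Lemma iter_fconnect (T : finType) (f : T -> T) x y :
  fconnect f x y -> exists i, y = iter i f x.
Proof. by move=> /iter_findex <-; eexists. Qed.

Lemma closed_iter (T : finType) (f : T -> T) (D : pred T) :
  (forall z, z \in D -> f z \in D) -> forall i x, x \in D -> iter i f x \in D.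
Proof. by move=> hD; elim=> [|i IH] x //= /IH /hD. Qed.

Lemma closed_conn (T : finType) (f : T -> T) (D : pred T) x y :
  (forall z, z \in D -> f z \in D) -> fconnect f x y -> x \in D -> y \in D.
Proof. by move=> hD /iter_fconnect [i ->]; apply: closed_iter. Qed.

Lemma eq_on_orbit n (f f' : 'I_n -> 'I_n) x :
  (forall z, fconnect f x z -> f' z = f z) ->
  [/\ forall i, iter i f' x = iter i f x,
      fconnect f' x =1 fconnect f x &
      cycword f' x = cycword f x].
Proof.
move=> H.
have Hi : forall i, iter i f' x = iter i f x.
  by elim=> [|i IH] //=; rewrite IH H // fconnect_iter.
have Hc : fconnect f' x =1 fconnect f x.
  move=> y; apply/idP/idP => /iter_fconnect [i ->].
    by rewrite Hi fconnect_iter.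
  by rewrite -Hi fconnect_iter.
have Ho : fingraph.order f' x = fingraph.order f x by apply: eq_card.
split => //; rewrite /cycword /orbit -/(fingraph.order f' x) -/(fingraph.order f x) Ho !traject_map.
by apply: eq_map => i; rewrite Hi.
Qed.

Definition cmin n (f : 'I_n -> 'I_n) (x : 'I_n) : 'I_n :=
  [arg min_(z < x | fconnect f x z) val z].

Lemma cmin_spec n (f : 'I_n -> 'I_n) x :
  [/\ fconnect f x (cmin f x), cycmin f (cmin f x) &
      forall y, fconnect f x y -> (cmin f x <= y)%N].
Proof.
rewrite /cmin; case: arg_minnP => [|z xz zmin]; first exact: connect0.
split => //; apply/forallP => y; apply/implyP => zy.
by apply: zmin; apply: connect_trans xz zy.
Qed.

Lemma cycmin_uniq n (f : 'I_n -> 'I_n) x y :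
  fconnect f x y -> fconnect f y x -> cycmin f x -> cycmin f y -> x = y.
Proof.
move=> xy yx /forallP /(_ y) /implyP /(_ xy) h1 /forallP /(_ x) /implyP /(_ yx) h2.
by apply: val_inj; apply/eqP; rewrite eqn_leq h1 h2.
Qed.

Lemma first_return (T : finType) (f h : T -> T) (r : T -> nat) (A : pred T) :
  injective h ->
  (forall y, y \in A -> [/\ (0 < r y)%N, iter (r y) h y = f y, f y \in A &
       forall i, (0 < i < r y)%N -> iter i h y \notin A]) ->
  forall x, x \in A ->
  [/\ fingraph.orbit h x = flatten [seq traject h y (r y) | y <- fingraph.orbit f x],
      forall y, y \in A -> fconnect f x y = fconnect h x y &
      forall y, y \in fingraph.orbit f x -> y \in A].
Proof.
move=> hinj Hr x xA.
pose s j := sumn [seq r y | y <- traject f x j].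
have sS : forall j, s j.+1 = s j + r (iter j f x).
  by move=> j; rewrite /s trajectSr map_rcons sumn_rcons.
have L1 : forall j, iter (s j) h x = iter j f x /\ iter j f x \in A.
  elim=> [|j [IH1 IH2]]; first by split.
  have [_ e fA _] := Hr _ IH2.
  by rewrite sS addnC iterD IH1 e.
have rpos : forall j, (0 < r (iter j f x))%N by move=> j; case: (Hr _ (L1 j).2).
have smono : forall j1 j2, (j1 < j2)%N -> (s j1 < s j2)%N.
  move=> j1 j2 /subnKC <-; elim: (j2 - j1.+1)%N => [|k IH].
    by rewrite addn0 sS; have := rpos j1; lia.
  by rewrite addnS sS; have := rpos (j1.+1 + k)%N; lia.
have L3 : forall i, exists j, (s j <= i < s j.+1)%N.
  elim=> [|i [j /andP [h1 h2]]].
    by exists 0%N; rewrite /= sS add0n rpos.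
  case: (ltngtP i.+1 (s j.+1)) => [lt|gt|eq].
  - by exists j; rewrite lt (leq_trans h1).
  - by move: (leq_ltn_trans h2 gt); rewrite ltnn.
  - by exists j.+1; rewrite eq leqnn /= smono.
have L3' : forall i, iter i h x \in A -> exists j, s j = i.
  move=> i iA; have [j /andP [h1 h2]] := L3 i.
  exists j; apply/eqP; rewrite eqn_leq h1 /= leqNgt; apply/negP => lt.
  have [_ _ _ nA] := Hr _ (L1 j).2.
  have c : (0 < i - s j < r (iter j f x))%N by move: h2; rewrite sS; lia.
  move: (nA _ c); rewrite -(L1 j).1 -iterD subnK ?(ltnW lt) //.
  by rewrite iA.
have L2 : forall j, traject h x (s j) =
    flatten [seq traject h y (r y) | y <- traject f x j].
  elim=> [|j IH] //.
  by rewrite sS trajectD IH trajectSr map_rcons flatten_rcons (L1 j).1.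
have conn : forall y, y \in A -> fconnect f x y = fconnect h x y.
  move=> y yA; apply/idP/idP => /iter_fconnect [i ey]; move: yA; rewrite ey => yA.
    by rewrite -(L1 i).1 fconnect_iter.
  have [j <-] := L3' _ yA.
  by rewrite (L1 j).1 fconnect_iter.
pose k := fingraph.order h x.
have hk : iter k h x = x by apply: iter_order.
have [j0 sj0] := L3' k (ltac:(by rewrite hk)).
have j0pos : (0 < j0)%N.
  by case: j0 sj0 => [|//] e; have := fingraph.order_gt0 h x; rewrite -/k -e.
have fj0 : iter j0 f x = x by rewrite -(L1 j0).1 sj0.
have cyc : fcycle f (traject f x j0).
  case: j0 j0pos fj0 {sj0} => // j' _ fj.
  have e : rcons (traject f (f x) j') x = traject f (f x) j'.+1.
    by rewrite [in RHS]trajectSr -iterSr fj.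
  by rewrite trajectS /= e fpath_traject.
have un : uniq (traject f x j0).
  rewrite traject_map map_inj_in_uniq ?iota_uniq //.
  move=> i1 i2; rewrite !mem_iota !add0n /= => lt1 lt2 e.
  have: iter (s i1) h x = iter (s i2) h x by rewrite !(L1 _).1.
  have o1 : (s i1 < k)%N by rewrite -sj0 smono.
  have o2 : (s i2 < k)%N by rewrite -sj0 smono.
  move=> /(congr1 (findex h x)); rewrite !findex_iter // => es.
  by case: (ltngtP i1 i2) => // /smono; rewrite es ltnn.
have xin : x \in traject f x j0 by case: (j0) j0pos => //= j' _; rewrite mem_head.
have ordf : fingraph.orbit f x = traject f x j0.
  rewrite (fingraph.orbitE cyc un xin); case: (j0) j0pos => //= j' _.
  by rewrite eqxx rot0.
split => //.
- by rewrite ordf /fingraph.orbit -/k -sj0 L2.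
- move=> y; rewrite ordf => /trajectP [i _ ->]; exact: (L1 i).2.
Qed.

Local Open Scope ring_scope.

Lemma mxword_cat (C : fieldType) N n (Z : 'I_n -> 'M[C]_N) s1 s2 :
  mxword Z (s1 ++ s2) = mxword Z s1 *m mxword Z s2.
Proof.
rewrite /mxword foldr_cat; elim: s1 => [|a s1 IH] /=; first by rewrite mul1mx.
by rewrite IH mulmxA.
Qed.

Lemma eq_in_mxword (C : fieldType) N n (Z1 Z2 : 'I_n -> 'M[C]_N) s :
  {in s, Z1 =1 Z2} -> mxword Z1 s = mxword Z2 s.
Proof.
elim: s => [|a s IH] H //=; rewrite H ?mem_head // IH // => y ys.
by apply: H; rewrite inE ys orbT.
Qed.

Lemma mxword_flatten (C : fieldType) N n (Z : 'I_n -> 'M[C]_N) (w : 'I_n -> seq 'I_n) s :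
  mxword (fun j => mxword Z (w j)) s = mxword Z (flatten (map w s)).
Proof.
elim: s => [|a s IH] //=; by rewrite mxword_cat -IH.
Qed.

Lemma mxword_scale (C : fieldType) N n (c : 'I_n -> C) (M : 'I_n -> 'M[C]_N) s :
  mxword (fun j => c j *: M j) s = (\prod_(j <- s) c j) *: mxword M s.
Proof.
elim: s => [|a s IH] /=; first by rewrite big_nil scale1r.
rewrite /mxword /= -/(mxword _ s) -/(mxword M s) IH big_cons.
by rewrite -scalemxAl -scalemxAr scalerA.
Qed.

Lemma trN_rot (C : fieldType) N n (Z : 'I_n -> 'M[C]_N) i s :
  trN (mxword Z (rot i s)) = trN (mxword Z s).
Proof.
by rewrite /trN /rot mxword_cat mxtrace_mulC -mxword_cat cat_take_drop.
Qed.

Lemma trN_conn (C : fieldType) N n (Z : 'I_n -> 'M[C]_N) (p : 'I_n -> 'I_n) x y :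
  injective p -> fconnect p x y ->
  trN (mxword Z (cycword p y)) = trN (mxword Z (cycword p x)).
Proof.
move=> pinj xy; rewrite /cycword -/(fingraph.orbit p y) -/(fingraph.orbit p x).
rewrite fconnect_orbit in xy.
by rewrite (fingraph.orbitE (cycle_orbit pinj x) (orbit_uniq p x) xy) trN_rot.
Qed.

Lemma cmin_eq n (p : 'I_n -> 'I_n) x y :
  injective p -> fconnect p x y -> cycmin p y -> cmin p x = y.
Proof.
move=> pinj xy cy; have [xc cc cm] := cmin_spec p x.
apply: (cycmin_uniq _ _ cc cy).
  by apply: connect_trans xy; rewrite (fconnect_sym pinj).
by apply: connect_trans xc; rewrite (fconnect_sym pinj).
Qed.

Local Close Scope ring_scope.

Theorem lemma3p19 (R : realType) (N n : nat) (S : {set 'I_n})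
  (sigma tau pi' pi : {perm 'I_n}) (Z : 'I_n -> 'M[R[i]]_N) :
  (0 < N)%N ->
  perm_on S sigma -> perm_on S tau ->
  perm_on (S :\: supp tau) pi' ->
  perm_on S pi ->
  (forall k, k \in supp tau -> pi k = tau k) ->
  (forall k, k \in S :\: supp tau -> pi k = pi' k) ->
  if S :\: supp tau == set0 then
    cycprod (pcmp pi sigma) S Z = cycprod (pcmp tau sigma) S Z /\
    cycprod (pcmp tau sigma) S Z = lambda sigma tau S Z
  else
    cycprod (pcmp pi sigma) S Z =
    cycprod (fun k => pi' (pminus sigma tau k)) (S :\: supp tau)
            (Zred sigma tau S Z).
Proof.
move=> _ hs ht hpi' hpi Hpt Hpp'.
set T := supp tau; set S' := S :\: T.
set g := pcmp tau sigma; set h := pcmp pi sigma.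
have inT k : (k \in T) = (tau k != k) by rewrite inE.
have TS k : k \in T -> k \in S.
  by rewrite inT; apply: contraR => kS; rewrite (out_perm ht kS).
have tauT k : (tau k \in T) = (k \in T).
  by rewrite !inT (inj_eq perm_inj).
have inS' k : (k \in S') = (k \notin T) && (k \in S) by rewrite !inE.
have gE k : g k = tau (sigma k) by rewrite /g /pcmp permM.
have hE k : h k = pi (sigma k) by rewrite /h /pcmp permM.
have gS k : k \in S -> g k \in S by rewrite gE !(perm_closed _ ht) (perm_closed _ hs).
have hS k : k \in S -> h k \in S by rewrite hE !(perm_closed _ hpi) (perm_closed _ hs).
have hT z : sigma z \in T -> h z = g z by move=> sT; rewrite hE gE Hpt.
have hS' z : z \in S -> sigma z \notin T ->
    [/\ g z = sigma z, sigma z \in S' & h z = pi' (sigma z)].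
  move=> zS sT; have sS' : sigma z \in S' by rewrite inS' sT (perm_closed _ hs).
  split => //; last by rewrite hE Hpp'.
  by rewrite gE; apply/eqP; move: sT; rewrite inT negbK.
have ginj : injective g := @perm_inj _ g.
have hinj : injective h := @perm_inj _ h.
case: ifP => [/eqP S'0 | /negbT S'n0].
  have hg : h = g.
    apply/permP => k; case sT: (sigma k \in T); first exact: hT.
    case sS: (sigma k \in S).
      by have := in_set0 (sigma k); rewrite -S'0 inS' sT sS.
    by rewrite hE gE (out_perm hpi) ?sS // (out_perm ht) ?sS.
  rewrite hg; split => //.
  rewrite /cycprod /lambda; apply: eq_bigl => x.
  case xS: (x \in S) => //=; case: (cycmin g x) => //=; symmetry.
  apply/forallP => y; apply/implyP => xy.
  have yS := closed_conn gS xy xS.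
  apply: contraT => yT; have := in_set0 y; rewrite -S'0 inS' yT yS.
  by [].
set rr := rind sigma tau.
set f := fun k => pi' (pminus sigma tau k).
have KP : forall y, y \in S' ->
   [/\ (0 < rr y)%N, iter (rr y) h y = f y, f y \in S',
       forall i, (0 < i < rr y)%N -> iter i h y \notin S' &
       traject h y (rr y) = [seq iter i g y | i <- iota 0 (rr y)]].
  move=> y yS'; have yS : y \in S by move: yS'; rewrite inS'; case/andP.
  have yT : y \notin T by move: yS'; rewrite inS'; case/andP.
  pose L := [seq iter i.+1 g y | i <- iota 0 n].
  have hasL : has (fun z => z \notin T) L.
    apply/hasP; exists y => //; apply/mapP; exists (fingraph.order g y).-1.
      rewrite mem_iota add0n /=.
      have : (fingraph.order g y <= n)%N.
        by rewrite /fingraph.order -[X in (_ <= X)%N](card_ord n) max_card.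
      by case: (fingraph.order g y) (fingraph.order_gt0 g y).
    by rewrite prednK ?fingraph.order_gt0 // iter_order.
  have jn : (find (fun z => z \notin T) L < n)%N.
    by move: (has_find (fun z => z \notin T) L); rewrite hasL size_map size_iota.
  have rrE : rr y = (find (fun z => z \notin T) L).+1 by [].
  set j := find _ _ in jn rrE.
  have GA : iter (rr y) g y \notin T.
    have := nth_find y hasL; rewrite -/j (nth_map 0%N) ?size_iota // nth_iota //.
  have GB : forall i, (0 < i < rr y)%N -> iter i g y \in T.
    case=> [|i] //; rewrite rrE => /andP [_ lt]; rewrite ltnS in lt.
    have lin : (i < n)%N by apply: ltn_trans lt jn.
    have := before_find y lt; rewrite (nth_map 0%N) ?size_iota //.
    by rewrite nth_iota // => /negbFE.
  have ItS : forall i, iter i g y \in S by move=> i; apply: closed_iter.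
  have HI : forall i, (i < rr y)%N -> iter i h y = iter i g y.
    elim=> [|i IH] // lt; rewrite iterS IH ?(ltnW lt) //.
    have := GB i.+1; rewrite lt /= gE tauT => /(_ isT) sT.
    by rewrite hT // gE.
  have [gz sS' hz] : [/\ g (iter j g y) = sigma (iter j g y),
     sigma (iter j g y) \in S' & h (iter j g y) = pi' (sigma (iter j g y))].
    apply: hS'; first exact: ItS.
    by move: GA; rewrite rrE iterS gE tauT.
  have fyE : f y = pi' (sigma (iter j g y)).
    by rewrite /f /pminus -/g -/rr rrE iterS gz.
  split.
  - by rewrite rrE.
  - by rewrite rrE iterS HI ?rrE // hz fyE.
  - by rewrite fyE (perm_closed _ hpi').
  - move=> i lti; rewrite HI; last by case/andP: lti.
    by rewrite inS' (GB _ lti).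
  - rewrite traject_map; apply/eq_in_map => i; rewrite mem_iota add0n => /andP [_ lt].
    exact: HI.
have FR : forall x, x \in S' ->
  [/\ fingraph.orbit h x = flatten [seq traject h y (rr y) | y <- fingraph.orbit f x],
      forall y, y \in S' -> fconnect f x y = fconnect h x y &
      forall y, y \in fingraph.orbit f x -> y \in S'].
  move=> x xS'; apply: (first_return (A := fun y => y \in S') hinj) => // y yS'.
  by have [? ? ? ? _] := KP y yS'.
have FR1 : forall x, x \in S' ->
    fingraph.orbit h x = flatten [seq traject h y (rr y) | y <- fingraph.orbit f x].
  by move=> x /FR [].
have FR2 : forall a b, a \in S' -> b \in S' -> fconnect f a b = fconnect h a b.
  by move=> a b /FR [_ H _]; apply: H.
have FR3 : forall x y, x \in S' -> y \in fingraph.orbit f x -> y \in S'.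
  by move=> x y /FR [_ _ H]; apply: H.
have fS' : forall y, y \in S' -> f y \in S' by move=> y /KP [].
have symf : forall a b, a \in S' -> b \in S' -> fconnect f a b = fconnect f b a.
  by move=> a b aS bS; rewrite FR2 // FR2 // (fconnect_sym hinj).
have [x0 x0S'] := set0Pn _ S'n0.
pose m := [arg min_(z < x0 in S') val z].
have [mS' mmin] : m \in S' /\ forall k, k \in S' -> (m <= k)%N.
  by rewrite /m; case: arg_minnP.
have cE : forall j, j \in S' -> [forall k in S', (j <= k)%N] = (j == m).
  move=> j jS'; apply/idP/eqP => [/forallP H | ->].
    apply: val_inj; apply/eqP; rewrite eqn_leq mmin // andbT.
    by have := H m; rewrite mS'.
  by apply/forallP => k; apply/implyP; apply: mmin.
set lam := lambda sigma tau S Z.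
pose V (p : 'I_n -> 'I_n) x := trN (mxword Z (cycword p x)).
have WE : forall x, x \in S' ->
    trN (mxword (Zred sigma tau S Z) (cycword f x)) =
    ((if m \in cycword f x then lam else 1) * V h x)%R.
  move=> x xS'.
  have inO : forall j, j \in cycword f x -> j \in S' by move=> j; apply: FR3.
  pose c j := if [forall k in S', (j <= k)%N] then lam else 1%R.
  pose w j := mxword Z [seq iter i g j | i <- iota 0 (rr j)].
  rewrite (@eq_in_mxword _ _ _ _ (fun j => (c j *: w j)%R)); last first.
    by move=> j _; rewrite /Zred /c /w; case: ifP => _; rewrite ?scale1r.
  rewrite mxword_scale.
  rewrite (@eq_in_mxword _ _ _ w (fun j => mxword Z (traject h j (rr j)))); last first.
    by move=> j /inO jS; rewrite /w; case: (KP j jS) => _ _ _ _ ->.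
  rewrite mxword_flatten.
  have -> : flatten [seq traject h j (rr j) | j <- cycword f x] = cycword h x.
    by rewrite /cycword -/(fingraph.orbit f x) -/(fingraph.orbit h x) FR1.
  rewrite /trN mxtraceZ mulrCA; congr (_ * _)%R.
  transitivity (\prod_(j <- cycword f x) (if j == m then lam else 1%R))%R.
    by apply: eq_big_seq => j /inO jS; rewrite /c cE.
  have ucyc : uniq (cycword f x) by apply: orbit_uniq.
  case: ifP => mc.
    rewrite (bigD1_seq m) //= eqxx big1 ?mulr1 // => j /negbTE ->; done.
  by rewrite big1_seq // => j /andP [_ jc]; case: eqP jc => // ->; rewrite mc.
pose Pp x := [forall y, fconnect h x y ==> (y \in T)].
have CA : (\prod_(x in S' | cycmin f x) (if m \in cycword f x then lam else 1))%R = lam.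
  have [xc cyc0 _] := cmin_spec f m.
  set x1 := cmin f m in xc cyc0 *.
  have x1S : x1 \in S' := closed_conn (D := fun z => z \in S') fS' xc mS'.
  have mcyc : forall x, (m \in cycword f x) = fconnect f x m.
    by move=> x; rewrite /cycword -/(fingraph.orbit f x) -fconnect_orbit.
  rewrite (bigD1 x1) /=; last by rewrite x1S cyc0.
  rewrite mcyc symf // xc big1 ?mulr1 // => x /andP [/andP [xS cx] nx].
  rewrite mcyc; case: ifP => // xm; exfalso; move/eqP: nx; apply.
  apply: cycmin_uniq cx cyc0; first exact: connect_trans xm xc.
  by rewrite symf //; apply: connect_trans xm xc.

have CB : (\prod_(x in S' | cycmin f x) V h x)%R =
          (\prod_(x in S | cycmin h x && ~~ Pp x) V h x)%R.
  pose Af := [set x in S' | cycmin f x].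
  transitivity (\prod_(x in Af) V h (cmin h x))%R.
    apply: eq_big; first by move=> x; rewrite [in RHS]inE.
    move=> x /andP [xS _]; case: (cmin_spec h x) => xc _ _.
    by rewrite /V (trN_conn _ hinj xc).
  have inj : {in Af &, injective (cmin h)}.
    move=> x1 x2 /setIdP [x1S c1] /setIdP [x2S c2] e.
    have [e1 _ _] := cmin_spec h x1; have [e2 _ _] := cmin_spec h x2.
    rewrite e in e1.
    have h12 : fconnect h x1 x2 by apply: connect_trans e1 _; rewrite (fconnect_sym hinj).
    apply: cycmin_uniq c1 c2; first by rewrite FR2.
    by rewrite symf // FR2.
  rewrite -(big_imset (V h) inj); apply: eq_bigl => y.
  apply/imsetP/idP.
  - move=> [x] /setIdP [xS' cx] ->.
    have [xc cc _] := cmin_spec h x.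
    have xS : x \in S by move: xS'; rewrite inS' => /andP [].
    rewrite (closed_conn (D := fun z => z \in S) hS xc xS) cc /=.
    apply/forallPn; exists x; rewrite negb_imply (fconnect_sym hinj) xc /=.
    by move: xS'; rewrite inS' => /andP [].
  - move=> /andP [yS /andP [cy /forallPn [z]]]; rewrite negb_imply => /andP [yz zT].
    have zS : z \in S := closed_conn (D := fun z => z \in S) hS yz yS.
    have zS' : z \in S' by rewrite inS' zT zS.
    have [zx cx _] := cmin_spec f z.
    have xS' : cmin f z \in S' := closed_conn (D := fun z => z \in S') fS' zx zS'.
    exists (cmin f z); first by apply/setIdP.
    symmetry; apply: (cmin_eq hinj _ cy).
    have h1 : fconnect h (cmin f z) z by rewrite (fconnect_sym hinj) -FR2.
    by apply: connect_trans h1 _; rewrite (fconnect_sym hinj).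

have CC : (\prod_(x in S | cycmin h x && Pp x) V h x)%R = lam.
  pose Pg x := [forall y, fconnect g x y ==> (y \in T)].
  have P1 : forall x, Pp x -> forall z, fconnect h x z -> g z = h z.
    move=> x Px z xz.
    have zT : z \in T by move/forallP: Px => /(_ z) /implyP; apply.
    have hzT : h z \in T.
      move/forallP: Px => /(_ (h z)) /implyP; apply.
      by apply: connect_trans xz (fconnect1 h z).
    case sT: (sigma z \in T); first by rewrite hT.
    have [_ sS' hz] := hS' z (TS z zT) (negbT sT).
    by move: hzT; rewrite hz; move: (sS'); rewrite -(perm_closed _ hpi') inS' => /andP [/negbTE ->].
  have P2 : forall x, Pg x -> forall z, fconnect g x z -> h z = g z.
    move=> x Px z xz; apply: hT.
    move/forallP: Px => /(_ (g z)) /implyP H.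
    have : g z \in T by apply: H; apply: connect_trans xz (fconnect1 g z).
    by rewrite gE tauT.
  have key : forall x, Pp x = Pg x.
    move=> x; case: (boolP (Pp x)) => hp; case: (boolP (Pg x)) => hg //.
      have [_ c _] := eq_on_orbit (P1 x hp).
      by move: hg; rewrite /Pg; under eq_forallb => y do rewrite c; rewrite -/(Pp x) hp.
    have [_ c _] := eq_on_orbit (P2 x hg).
    by move: hp; rewrite /Pp; under eq_forallb => y do rewrite c; rewrite -/(Pg x) hg.
  rewrite /lam /lambda; apply: eq_big => [x|x].
    case: (boolP (Pp x)) => hp; last by rewrite -/(Pg x) -key (negbTE hp) !andbF.
    have [_ c _] := eq_on_orbit (P1 x hp).
    have -> : cycmin g x = cycmin h x by apply: eq_forallb => y; rewrite c.
    by rewrite -/(Pg x) -key hp.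
  move=> /andP [_ /andP [_ hp]].
  by have [_ _ ->] := eq_on_orbit (P1 x hp).

rewrite /cycprod.
transitivity (\prod_(x in S' | cycmin f x)
      ((if m \in cycword f x then lam else 1) * V h x))%R; last first.
  by apply: eq_bigr => x /andP [xS _]; rewrite WE.
rewrite [RHS]big_split /= CA CB (bigID Pp) /=.
rewrite -CC; congr (_ * _)%R; apply: eq_bigl => x; by rewrite andbA.
Qed.
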